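(* For every fixed integer $r\ge1$, the ordinary generating function $T_r(z)=\sum_{c\ge0}T(r,c)z^c$ is a rational function of $z$.
   Context: A tatami tiling of the $r\times c$ rectangular grid is a tiling by monomers ($1\times1$ tiles) and dimers ($1\times2$ or $2\times1$ tiles) such that no point is a corner of four distinct tiles. $T(r,c)$ denotes the total number of tatami tilings of the $r\times c$ grid (with any number of monomers), with $T(r,0)=1$. *)

(* Defs.v *)
From mathcomp Require Import all_boot all_order all_algebra.
Set Implicit Arguments. Unset Strict Implicit. Unset Printing Implicit Defensive.
Import GRing.Theory Num.Theory.

Definition cell (r c : nat) := ('I_r * 'I_c)%type.

Section Tatami.
Variables r c : nat.

Definition adjacent (x y : cell r c) : bool :=
  ((nat_of_ord x.1 == y.1) && ((x.2 : nat).+1 == y.2)) ||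
  ((nat_of_ord x.2 == y.2) && ((x.1 : nat).+1 == y.1)).

Definition is_tile (t : {set cell r c}) : bool :=
  [exists x, t == [set x]] || [exists x, exists y, adjacent x y && (t == [set x; y])].

Definition is_tiling (P : {set {set cell r c}}) : bool :=
  partition P [set: cell r c] && [forall t in P, is_tile t].

(* no point is a corner of four distinct tiles: the only points that can be
   corners of four tiles are interior grid points, surrounded by the 2x2 block
   of cells a=(i,j), b=(i,j+1), d=(i+1,j), e=(i+1,j+1). *)
Definition no_four_corner (P : {set {set cell r c}}) : bool :=
  [forall a : cell r c, forall b : cell r c, forall d : cell r c, forall e : cell r c,
    ([&& nat_of_ord b.1 == a.1, (b.2 : nat) == (a.2).+1,
         (d.1 : nat) == (a.1).+1, nat_of_ord d.2 == a.2,
         (e.1 : nat) == (a.1).+1 & (e.2 : nat) == (a.2).+1]) ==>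
    ~~ [&& pblock P a != pblock P b, pblock P a != pblock P d,
           pblock P a != pblock P e, pblock P b != pblock P d,
           pblock P b != pblock P e & pblock P d != pblock P e]].

Definition is_tatami (P : {set {set cell r c}}) : bool :=
  is_tiling P && no_four_corner P.

End Tatami.

(* T(r,c): number of tatami tilings of the r x c grid (T(r,0) = 1 automatically:
   the empty partition of the empty grid). *)
Definition T (r c : nat) : nat := #|[set P : {set {set cell r c}} | is_tatami P]|.

(* The ordinary generating function sum_n a(n) z^n is a rational function:
   there are polynomials p, q (q <> 0) with q(z) * A(z) = p(z) as formal power series. *)
Local Open Scope ring_scope.
Definition rational_gf (a : nat -> nat) : Prop :=
  exists p q : {poly rat}, q != 0 /\
    forall n : nat, \sum_(i < n.+1) q`_i * (a (n - i)%N)%:R = p`_n.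

(* Main.v *)
Require Import Defs.
From mathcomp Require Import all_boot all_order all_algebra.
From mathcomp Require Import zify ring.
Set Implicit Arguments. Unset Strict Implicit. Unset Printing Implicit Defensive.

Section RatPart.
Import GRing.Theory Num.Theory.
Local Open Scope ring_scope.

Lemma rat_from_rec (a : nat -> nat) (k N : nat) (chi : {poly rat}) :
  chi`_k = 1 ->
  (forall n, (N <= n)%N -> \sum_(j < k.+1) chi`_j * (a (n + j)%N)%:R = 0) ->
  rational_gf a.
Proof.
move=> hk hrec.
pose q : {poly rat} := \poly_(i < k.+1) chi`_(k - i).
pose S n := \sum_(i < n.+1) q`_i * (a (n - i)%N)%:R.
exists (\poly_(n < N + k) S n), q; split.
  apply/eqP => /(congr1 (fun p : {poly rat} => p`_0)).
  by rewrite coef_poly /= subn0 hk coef0 => /eqP; rewrite oner_eq0.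
move=> n; rewrite coef_poly; case: ifP => // /negbT; rewrite -leqNgt => hn.
rewrite /S.
have hkn : (k.+1 <= n.+1)%N by lia.
rewrite (bigID (fun i : 'I_n.+1 => (i < k.+1)%N)) /=.
rewrite [X in _ + X]big1 ?addr0; last first.
  by move=> i /negbTE hi; rewrite /q coef_poly hi mul0r.
rewrite -(big_ord_widen _ (fun i => q`_i * (a (n - i)%N)%:R) hkn).
rewrite -[RHS](hrec (n - k)%N); last by lia.
rewrite -(big_mkord xpredT (fun i => q`_i * (a (n - i)%N)%:R)).
rewrite -(big_mkord xpredT (fun j => chi`_j * (a (n - k + j)%N)%:R)).
rewrite (big_nat_rev _ _ 0 k.+1) /=.
apply: eq_big_nat => i /andP [_ hi].
rewrite /q coef_poly add0n.
have -> : (k.+1 - i.+1 < k.+1)%N by lia.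
congr (_ * _); first by congr (_`_ _); lia.
congr (_%:R); congr a; lia.
Qed.


Lemma CH_sum n (A : 'M[rat]_n) :
  \sum_(j < n.+1) (char_poly A)`_j *: A ^+ j = 0.
Proof.
case: n A => [|n] A; first by apply: flatmx0.
have := Cayley_Hamilton A.
rewrite -{1}(coefK (char_poly A)) poly_def size_char_poly.
rewrite rmorph_sum /= => H; rewrite -[RHS]H; apply: eq_bigr => i _.
by rewrite linearZ /= rmorphXn /= horner_mx_X.
Qed.

Lemma rec_mx n (A : 'M[rat]_n) (u : 'rV_n) (v : 'cV_n) m :
  \sum_(j < n.+1) (char_poly A)`_j * (u *m A ^+ (m + j) *m v) 0 0 = 0.
Proof.
have -> : \sum_(j < n.+1) (char_poly A)`_j * (u *m A ^+ (m + j) *m v) 0 0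
   = (u *m A ^+ m *m (\sum_(j < n.+1) (char_poly A)`_j *: A ^+ j) *m v) 0 0.
  rewrite mulmx_sumr mulmx_suml summxE; apply: eq_bigr => j _.
  by rewrite -scalemxAr -scalemxAl [RHS]mxE exprD -mulmxE !mulmxA.
by rewrite (CH_sum A) mulmx0 mul0mx mxE.
Qed.

End RatPart.

Section WordsPart.
Import GRing.Theory Num.Theory.

Section Words.
Variables (S : finType) (R : rel S) (st en : pred S).

Definition G n s := \sum_(t : n.-tuple S) (path R s t && en (last s t) : nat).

Lemma sum_tupleS n (F : n.+1.-tuple S -> nat) :
  \sum_(t : n.+1.-tuple S) F t = \sum_(y : S) \sum_(t : n.-tuple S) F [tuple of y :: t].
Proof.
rewrite pair_big /=.
rewrite (reindex (fun p : S * n.-tuple S => [tuple of p.1 :: p.2])) //=.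
exists (fun t : n.+1.-tuple S => (thead t, [tuple of behead t])).
  by move=> [y t] _ /=; rewrite theadE; congr pair; apply: val_inj.
by move=> t _; apply: val_inj => /=; case: t => [[|y s]] //=.
Qed.

Lemma G0 s : G 0 s = en s.
Proof.
rewrite /G (eq_bigr (fun _ => (en s : nat))); last by move=> t _; rewrite tuple0.
by rewrite sum_nat_const card_tuple expn0 mul1n.
Qed.

Lemma GS n s : G n.+1 s = \sum_(y : S) R s y * G n y.
Proof.
rewrite /G sum_tupleS; apply: eq_bigr => y _ /=.
rewrite big_distrr /=; apply: eq_bigr => t _.
by case: (R s y); case: (path _ _ _); case: (en _).
Qed.

Definition Cnt n := #|[set t : n.+1.-tuple S |
   st (thead t) && path R (thead t) (behead t) && en (last (thead t) (behead t))]|.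

Lemma CntE n : Cnt n = \sum_(s : S) st s * G n s.
Proof.
rewrite /Cnt -sum1_card big_mkcond /= sum_tupleS; apply: eq_bigr => y _.
rewrite /G big_distrr /=; apply: eq_bigr => t _; rewrite in_set theadE /=.
by case: (st y); case: (path _ _ _); case: (en _).
Qed.

Local Open Scope ring_scope.
Definition Mw : 'M[rat]_#|S| := \matrix_(i, j) ((R (enum_val i) (enum_val j) : nat)%:R).
Definition vw : 'cV[rat]_#|S| := \col_i ((en (enum_val i) : nat)%:R).
Definition uw : 'rV[rat]_#|S| := \row_j ((st (enum_val j) : nat)%:R).

Lemma sum_enum (F : S -> rat) : \sum_(i < #|S|) F (enum_val i) = \sum_(y : S) F y.
Proof. by have := @big_enum_val _ _ _ S S F; move=> <-. Qed.

Lemma GM n s : ((G n s)%:R : rat) = (Mw ^+ n *m vw) (enum_rank s) 0.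
Proof.
elim: n s => [|n IH] s.
  rewrite G0 expr0 mul1mx mxE.
  by have := enum_rankK s; move=> ->.
rewrite GS exprS -mulmxA mxE natr_sum -sum_enum; apply: eq_bigr => i _.
rewrite natrM IH enum_valK; congr (_ * _); rewrite mxE.
by have := enum_rankK s; move=> ->.
Qed.

Lemma CntM n : ((Cnt n)%:R : rat) = (uw *m Mw ^+ n *m vw) 0 0.
Proof.
rewrite CntE -mulmxA mxE natr_sum -sum_enum; apply: eq_bigr => i _.
by rewrite natrM GM enum_valK [uw _ _]mxE.
Qed.
End Words.

End WordsPart.

Section Grid.
Variables r c : nat.
Local Notation cT := (cell r c).

Definition dir (x y : cT) : nat :=
  if (x.1 == y.1 :> nat) && (y.2 == (x.2).+1 :> nat) then 1
  else if (x.1 == y.1 :> nat) && (x.2 == (y.2).+1 :> nat) then 2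
  else if (y.1 == (x.1).+1 :> nat) && (x.2 == y.2 :> nat) then 3
  else if (x.1 == (y.1).+1 :> nat) && (x.2 == y.2 :> nat) then 4 else 0.

Lemma cell_eq (x y : cT) : (x.1 : nat) = y.1 -> (x.2 : nat) = y.2 -> x = y.
Proof. by case: x y => [a b] [a' b'] /= /val_inj -> /val_inj ->. Qed.

Ltac dsolve := rewrite /dir; repeat (case: ifP => /=); try (move=> *; lia).

Lemma dir_le4 x y : dir x y <= 4.
Proof. dsolve. Qed.

Lemma dirxx x : dir x x = 0.
Proof. dsolve. Qed.

Lemma dir_uniq x y z : 0 < dir x y -> dir x y = dir x z -> y = z.
Proof.
move=> h1 h2; apply: cell_eq; move: h1 h2; dsolve.
Qed.

Lemma dir_sym x y : 0 < dir x y -> 0 < dir y x.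
Proof. dsolve. Qed.

Lemma dir_neq x y : 0 < dir x y -> x != y.
Proof. by move=> h; apply/eqP => e; move: h; rewrite e dirxx. Qed.

Lemma adjacent_dir x y : adjacent x y = (dir x y == 1) || (dir x y == 3).
Proof. rewrite /adjacent; dsolve. Qed.

Lemma adjacent_pos x y : adjacent x y -> 0 < dir x y.
Proof. rewrite adjacent_dir; dsolve. Qed.


Definition lab (P : {set {set cT}}) (x : cT) : nat :=
  if [pick y in pblock P x | 0 < dir x y] is Some y then dir x y else 0.

Definition blk (f : cT -> nat) (x : cT) : {set cT} :=
  x |: [set y | (0 < f x) && (dir x y == f x)].

Section Tiling.
Variable P : {set {set cT}}.
Hypothesis tP : is_tiling P.

Lemma tP_part : partition P [set: cT].
Proof. by case/andP: tP. Qed.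

Lemma tP_triv : trivIset P.
Proof. by case/and3P: tP_part. Qed.

Lemma tP_cover : cover P = [set: cT].
Proof. by apply/eqP; case/and3P: tP_part. Qed.

Lemma tP_set0 : set0 \notin P.
Proof. by case/and3P: tP_part. Qed.

Lemma tP_mem x : x \in pblock P x.
Proof. by rewrite mem_pblock tP_cover inE. Qed.

Lemma tP_in x : pblock P x \in P.
Proof. by apply: pblock_mem; rewrite tP_cover inE. Qed.

Lemma tP_tile x : is_tile (pblock P x).
Proof. by case/andP: tP => _ /forallP /(_ (pblock P x)); rewrite tP_in. Qed.

Lemma tP_shape x : pblock P x = [set x] \/
   exists2 y, 0 < dir x y & pblock P x = [set x; y].
Proof.
have hx := tP_mem x.
case/orP: (tP_tile x) => [/existsP [x0 /eqP e] | /existsP [x0 /existsP [y0 /andP [ha /eqP e]]]].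
  by left; move: hx; rewrite e => /set1P ->.
right; move: hx; rewrite e => /set2P [->|->].
  by exists y0 => //; apply: adjacent_pos.
exists x0; first by apply: dir_sym; apply: adjacent_pos.
by rewrite setUC.
Qed.

Lemma lab1 x : pblock P x = [set x] -> lab P x = 0.
Proof.
move=> e; rewrite /lab; case: pickP => // y /andP []; rewrite e => /set1P ->.
by rewrite dirxx.
Qed.

Lemma lab2 x y : 0 < dir x y -> pblock P x = [set x; y] -> lab P x = dir x y.
Proof.
move=> hy e; rewrite /lab; case: pickP => [z /andP []|].
  rewrite e => /set2P [->|-> //]; by rewrite dirxx.
by move/(_ y); rewrite e set22 hy.
Qed.

Lemma pblk_blk x : pblock P x = blk (lab P) x.
Proof.
case: (tP_shape x) => [e | [y hy e]].
  rewrite e /blk lab1 //; apply/setP => z; rewrite !inE /=.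
  by rewrite orbF.
rewrite e /blk (lab2 hy e) hy /=; apply/setP => z; rewrite !inE.
congr (_ || _); apply/eqP/eqP => [->//|/esym h]; exact/esym/(dir_uniq hy h).
Qed.

Lemma lab_le4 x : lab P x <= 4.
Proof. rewrite /lab; case: pickP => // y _; exact: dir_le4. Qed.

Lemma pb_eq u w : u != w -> pblock P u = pblock P w -> 0 < lab P u /\ dir u w = lab P u.
Proof.
move=> hne e; have : w \in pblock P u by rewrite e tP_mem.
rewrite pblk_blk /blk => /setU1P [ew|]; first by rewrite ew eqxx in hne.
by rewrite inE => /andP [-> /eqP].
Qed.

Lemma lab_partner x : 0 < lab P x -> exists y, dir x y = lab P x.
Proof.
case: (tP_shape x) => [e | [y hy e]]; first by rewrite lab1.
by exists y; rewrite (lab2 hy e).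
Qed.

Lemma lab_opp x y : 0 < lab P x -> dir x y = lab P x -> lab P y = dir y x.
Proof.
case: (tP_shape x) => [e | [z hz e]]; first by rewrite lab1.
rewrite (lab2 hz e) => _ h; have ezy : z = y by apply: dir_uniq hz (esym h).
subst z.
have ey : pblock P y = pblock P x by apply: same_pblock; [exact: tP_triv| rewrite e set22].
case: (tP_shape y) => [e1 | [w hw e1]].
  move: ey; rewrite e e1 => /setP /(_ x); rewrite !inE eqxx /= => /esym h2.
  by move: hz; move: h2 => /esym /eqP ->; rewrite dirxx.
rewrite (lab2 hw e1); have : x \in pblock P y by rewrite ey tP_mem.
rewrite e1 => /set2P [ex|-> //].
by move: hz; rewrite ex dirxx.
Qed.

Lemma tP_eq : P = [set blk (lab P) x | x in [set: cT]].
Proof.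
apply/setP => B; apply/idP/imsetP => [hB | [x _ ->]]; last by rewrite -pblk_blk tP_in.
have : B != set0 by apply: contraNneq tP_set0 => <-.
case/set0Pn => x hx; exists x => //; rewrite -pblk_blk.
by apply/esym/def_pblock => //; exact: tP_triv.
Qed.

End Tiling.

Definition blockpos (a b d e : cT) : bool :=
  [&& nat_of_ord b.1 == a.1, (b.2 : nat) == (a.2).+1,
      (d.1 : nat) == (a.1).+1, nat_of_ord d.2 == a.2,
      (e.1 : nat) == (a.1).+1 & (e.2 : nat) == (a.2).+1].

Definition validf (f : cT -> nat) : bool :=
  [&& [forall x, (0 < f x) ==> [exists y, dir x y == f x]],
      [forall x, forall y, ((0 < f x) && (dir x y == f x)) ==> (f y == dir y x)] &
      [forall a, forall b, forall d, forall e,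
         blockpos a b d e ==> [|| f a == 1, f a == 3, f b == 3 | f d == 1]]].

Lemma blockposE a b d e : blockpos a b d e ->
  [/\ dir a b = 1, dir a d = 3 & dir a e = 0] /\ [/\ dir b d = 0, dir b e = 3 & dir d e = 1].
Proof.
case/andP => /eqP h1 /and5P [/eqP h2 /eqP h3 /eqP h4 /eqP h5 /eqP h6].
split; split; dsolve.
Qed.

Lemma blockpos_neq a b d e : blockpos a b d e -> (a != e) && (b != d).
Proof.
case/andP => /eqP h1 /and5P [/eqP h2 /eqP h3 /eqP h4 /eqP h5 /eqP h6].
apply/andP; split; apply/eqP => h; subst; lia.
Qed.

Lemma tatami_valid P : is_tatami P -> validf (lab P).
Proof.
case/andP => tP nfc.
apply/and3P; split.
- apply/forallP => x; apply/implyP => /(lab_partner tP) [y hy].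
  by apply/existsP; exists y; rewrite hy.
- apply/forallP => x; apply/forallP => y; apply/implyP => /andP [h1 /eqP h2].
  by rewrite (lab_opp tP h1 h2).
apply/forallP => a; apply/forallP => b; apply/forallP => d; apply/forallP => e.
apply/implyP => bp.
have [[dab dad dae] [dbd dbe dde]] := blockposE bp.
case/andP: (blockpos_neq bp) => nae nbd.
move/forallP: nfc => /(_ a) /forallP /(_ b) /forallP /(_ d) /forallP /(_ e).
move/implyP => /(_ bp) H.
have nab : a != b by apply: dir_neq; rewrite dab.
have nad : a != d by apply: dir_neq; rewrite dad.
have nbe : b != e by apply: dir_neq; rewrite dbe.
have nde : d != e by apply: dir_neq; rewrite dde.
case/nandP: H => [/negbNE/eqP H|/nandP [/negbNE/eqP H|/nandP [/negbNE/eqP H|/nandP [/negbNE/eqP H|/nandP [/negbNE/eqP H|/negbNE/eqP H]]]]].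
- by case: (pb_eq tP nab H) => _ <-; rewrite dab.
- by case: (pb_eq tP nad H) => _ <-; rewrite dad orbT.
- by case: (pb_eq tP nae H) => h1 h2; move: h1; rewrite -h2 dae.
- by case: (pb_eq tP nbd H) => h1 h2; move: h1; rewrite -h2 dbd.
- by case: (pb_eq tP nbe H) => _ <-; rewrite dbe !orbT.
- by case: (pb_eq tP nde H) => _ <-; rewrite dde !orbT.
Qed.


Section Build.
Variable f : cT -> nat.
Hypothesis hv : validf f.

Lemma hv2 x : 0 < f x -> exists y, dir x y = f x.
Proof.
case/and3P: hv => /forallP /(_ x) /implyP H _ _ /H /existsP [y /eqP h].
by exists y.
Qed.

Lemma hv3 x y : 0 < f x -> dir x y = f x -> f y = dir y x.
Proof.
case/and3P: hv => _ /forallP /(_ x) /forallP /(_ y) /implyP H _ h1 h2.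
by apply/eqP/H; rewrite h1 h2 eqxx.
Qed.

Lemma hv4 a b d e : blockpos a b d e -> [|| f a == 1, f a == 3, f b == 3 | f d == 1].
Proof.
case/and3P: hv => _ _ /forallP /(_ a) /forallP /(_ b) /forallP /(_ d) /forallP /(_ e).
by move/implyP.
Qed.

Lemma blk_pair x y : 0 < f x -> dir x y = f x -> blk f x = [set x; y].
Proof.
move=> h1 h2; rewrite /blk h1 /=; apply/setP => z; rewrite !inE.
congr (_ || _); apply/eqP/eqP => [h|->//]; apply/esym/(dir_uniq (x:=x) (y:=y)); first by rewrite h2.
by rewrite h h2.
Qed.

Lemma blk0 x : f x = 0 -> blk f x = [set x].
Proof.
by move=> h; rewrite /blk h /=; apply/setP => z; rewrite !inE orbF.
Qed.

Lemma blk_sym x y : y \in blk f x -> blk f y = blk f x.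
Proof.
case/setU1P => [-> //|]; rewrite inE => /andP [h1 /eqP h2].
have h3 := hv3 h1 h2.
rewrite (blk_pair h1 h2) (blk_pair (y := x)); first by rewrite setUC.
  by rewrite h3; apply: dir_sym; rewrite h2.
by rewrite h3.
Qed.

Definition Pf := [set blk f x | x in [set: cT]].

Lemma Pf_triv : trivIset Pf.
Proof.
apply/trivIsetP => A B /imsetP [x _ ->] /imsetP [y _ ->] hne.
apply/pred0P => z /=; apply/negbTE/negP => /andP [hx hy].
by move/negP: hne; apply; rewrite -(blk_sym hx) -(blk_sym hy).
Qed.

Lemma blk_mem x : x \in blk f x.
Proof. exact: setU11. Qed.

Lemma Pf_cover : cover Pf = [set: cT].
Proof.
apply/setP => x; rewrite inE; apply/bigcupP; exists (blk f x) => //.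
  by apply/imsetP; exists x.
exact: blk_mem.
Qed.

Lemma Pf_pblock x : pblock Pf x = blk f x.
Proof. apply: def_pblock; [exact: Pf_triv| by apply/imsetP; exists x | exact: blk_mem]. Qed.

Lemma Pf_tiling : is_tiling Pf.
Proof.
apply/andP; split.
  apply/and3P; split; first by rewrite Pf_cover.
    exact: Pf_triv.
  apply/imsetP => [[x _ /esym e]]; by move: (blk_mem x); rewrite e inE.
apply/forallP => B; apply/implyP => /imsetP [x _ ->].
case: (posnP (f x)) => h.
  by rewrite blk0 //; apply/orP; left; apply/existsP; exists x.
have [y hy] := hv2 h.
rewrite (blk_pair h hy); apply/orP; right.
have hdy : 0 < dir y x by apply: dir_sym; rewrite hy.
case/boolP: (adjacent x y) => ha.
  by apply/existsP; exists x; apply/existsP; exists y; rewrite ha eqxx.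
apply/existsP; exists y; apply/existsP; exists x; rewrite setUC eqxx andbT.
move: ha hdy; rewrite !adjacent_dir; dsolve.
Qed.

Lemma Pf_lab x : lab Pf x = f x.
Proof.
have tP := Pf_tiling.
case: (posnP (f x)) => h.
  by rewrite lab1 // Pf_pblock blk0.
have [y hy] := hv2 h.
by rewrite (lab2 (y := y)) ?hy // Pf_pblock (blk_pair h hy).
Qed.

Lemma Pf_tatami : is_tatami Pf.
Proof.
apply/andP; split; first exact: Pf_tiling.
apply/forallP => a; apply/forallP => b; apply/forallP => d; apply/forallP => e.
apply/implyP => bp; have [[dab dad dae] [dbd dbe dde]] := blockposE bp.
rewrite !Pf_pblock.
case/or4P: (hv4 bp) => /eqP h.
- have e1 : blk f b = blk f a by apply: blk_sym; rewrite /blk !inE h dab eqxx orbT.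
  by rewrite e1 eqxx.
- have e1 : blk f d = blk f a by apply: blk_sym; rewrite /blk !inE h dad eqxx orbT.
  by rewrite e1 eqxx /= andbF.
- have e1 : blk f e = blk f b by apply: blk_sym; rewrite /blk !inE h dbe eqxx orbT.
  by rewrite e1 eqxx /= !andbF.
- have e1 : blk f e = blk f d by apply: blk_sym; rewrite /blk !inE h dde eqxx orbT.
  by rewrite e1 eqxx /= !andbF.
Qed.

End Build.

Lemma dirE x y :
  [/\ dir x y = 1 -> (y.1 : nat) = x.1 /\ (y.2 : nat) = (x.2).+1,
      dir x y = 2 -> (y.1 : nat) = x.1 /\ (x.2 : nat) = (y.2).+1,
      dir x y = 3 -> (y.1 : nat) = (x.1).+1 /\ (y.2 : nat) = x.2 &
      dir x y = 4 -> (x.1 : nat) = (y.1).+1 /\ (y.2 : nat) = x.2].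
Proof. split; dsolve. Qed.

Definition gloc (L : nat -> nat -> nat) (i j : nat) : bool :=
  [&& (L i j == 1) ==> (j.+1 < c) && (L i j.+1 == 2),
      (L i j == 2) ==> (0 < j) && (L i j.-1 == 1),
      (L i j == 3) ==> (i.+1 < r) && (L i.+1 j == 4),
      (L i j == 4) ==> (0 < i) && (L i.-1 j == 3) &
      ((i.+1 < r) && (j.+1 < c)) ==>
         [|| L i j == 1, L i j == 3, L i j.+1 == 3 | L i.+1 j == 1]].

Definition gridOK (L : nat -> nat -> nat) : bool :=
  [forall i : 'I_r, forall j : 'I_c, gloc L i j].

Definition mkc (i j : nat) (hi : i < r) (hj : j < c) : cT := (Ordinal hi, Ordinal hj).

Lemma validf_grid (L : nat -> nat -> nat) :
  (forall (i : 'I_r) (j : 'I_c), L i j <= 4) ->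
  validf (fun x : cT => L x.1 x.2) = gridOK L.
Proof.
move=> hL; apply/idP/idP => [hv | hg].
  apply/forallP => i; apply/forallP => j.
  pose x : cT := (i, j).
  have H2 := @hv2 _ hv x; have H3 := @hv3 _ hv x.
  have H4 := hv4 hv.
  apply/and5P; split; apply/implyP.
  - move/eqP => h; have [y hy] : exists y, dir x y = 1 by rewrite -h; apply: H2; rewrite /= h.
    have [/(_ hy) [e1 e2] _ _ _] := dirE x y.
    rewrite /= in e1 e2; have := ltn_ord y.2; rewrite e2 => ->.
    have := H3 y; rewrite /= h hy => /(_ isT erefl); rewrite e1 e2 => ->.
    by apply/eqP; move: hy; dsolve.
  - move/eqP => h; have [y hy] : exists y, dir x y = 2 by rewrite -h; apply: H2; rewrite /= h.
    have [_ /(_ hy) [e1 e2] _ _] := dirE x y.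
    rewrite /= in e1 e2; rewrite e2 /=.
    have := H3 y; rewrite /= h hy => /(_ isT erefl); rewrite e1 => ->.
    by apply/eqP; move: hy; dsolve.
  - move/eqP => h; have [y hy] : exists y, dir x y = 3 by rewrite -h; apply: H2; rewrite /= h.
    have [_ _ /(_ hy) [e1 e2] _] := dirE x y.
    rewrite /= in e1 e2; have := ltn_ord y.1; rewrite e1 => ->.
    have := H3 y; rewrite /= h hy => /(_ isT erefl); rewrite e1 e2 => ->.
    by apply/eqP; move: hy; dsolve.
  - move/eqP => h; have [y hy] : exists y, dir x y = 4 by rewrite -h; apply: H2; rewrite /= h.
    have [_ _ _ /(_ hy) [e1 e2]] := dirE x y.
    rewrite /= in e1 e2; rewrite e1 /=.
    have := H3 y; rewrite /= h hy => /(_ isT erefl); rewrite e2 => ->.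
    by apply/eqP; move: hy; dsolve.
  case/andP => hi hj.
  have hj' : j < c by [].
  pose b := mkc (ltn_ord i) hj; pose d := mkc hi (ltn_ord j); pose e := mkc hi hj.
  have := H4 x b d e; rewrite /blockpos /= !eqxx => /(_ isT).
  done.
have G (x : cT) : gloc L x.1 x.2 by move/forallP: hg => /(_ x.1) /forallP /(_ x.2).
apply/and3P; split.
- apply/forallP => x; apply/implyP.
  move: (G x) (hL x.1 x.2) => /and5P [g1 g2 g3 g4 _].
  case E: (L x.1 x.2) => [|[|[|[|[|k]]]]] //= _ _.
  + move: g1; rewrite E => /implyP /(_ isT) /andP [hj _].
    apply/existsP; exists (mkc (ltn_ord x.1) hj); apply/eqP; dsolve.
  + move: g2; rewrite E => /implyP /(_ isT) /andP [hj _].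
    have hj' : (x.2).-1 < c by apply: leq_ltn_trans (leq_pred _) (ltn_ord _).
    apply/existsP; exists (mkc (ltn_ord x.1) hj'); apply/eqP; move: hj; dsolve.
  + move: g3; rewrite E => /implyP /(_ isT) /andP [hi _].
    apply/existsP; exists (mkc hi (ltn_ord x.2)); apply/eqP; dsolve.
  + move: g4; rewrite E => /implyP /(_ isT) /andP [hi _].
    have hi' : (x.1).-1 < r by apply: leq_ltn_trans (leq_pred _) (ltn_ord _).
    apply/existsP; exists (mkc hi' (ltn_ord x.2)); apply/eqP; move: hi; dsolve.
- apply/forallP => x; apply/forallP => y; apply/implyP => /andP [hp /eqP hd].
  move: (G x) (dir_le4 x y) => /and5P [g1 g2 g3 g4 _].
  have [D1 D2 D3 D4] := dirE x y.
  case D: (dir x y) hd => [|[|[|[|[|k]]]]] hd; move: hp g1 g2 g3 g4; rewrite -hd //= => _ g1 g2 g3 g4 _.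
  + move: g1 => /andP [_ /eqP h]; have [e1 e2] := D1 D.
    by rewrite e1 e2 h; apply/eqP; move: D; dsolve.
  + move: g2 => /andP [_ /eqP h]; have [e1 e2] := D2 D.
    by move: h; rewrite e2 /= e1 => ->; apply/eqP; move: D; dsolve.
  + move: g3 => /andP [_ /eqP h]; have [e1 e2] := D3 D.
    by rewrite e1 e2 h; apply/eqP; move: D; dsolve.
  + move: g4 => /andP [_ /eqP h]; have [e1 e2] := D4 D.
    by move: h; rewrite e1 /= e2 => ->; apply/eqP; move: D; dsolve.
apply/forallP => a; apply/forallP => b; apply/forallP => d; apply/forallP => e.
apply/implyP => bp; move: (bp) => /andP [/eqP h1 /and5P [/eqP h2 /eqP h3 /eqP h4 /eqP h5 /eqP h6]].
move: (G a) => /and5P [_ _ _ _ /implyP g5].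
have hi : (a.1).+1 < r by rewrite -h5.
have hj : (a.2).+1 < c by rewrite -h6.
by move: (g5 (introT andP (conj hi hj))); rewrite h1 h2 h3 h4.
Qed.

End Grid.


Section Cols.
Variable r : nat.
Definition colT := {ffun 'I_r -> 'I_5}.
Definition s0 : colT := [ffun _ => ord0].

Definition gs (s : colT) (i : nat) : nat :=
  if @insub nat (fun k => k < r) _ i is Some i' then val (s i') else 0.

Lemma gsE (s : colT) (i : 'I_r) : gs s i = s i.
Proof. by rewrite /gs valK. Qed.

Lemma gs_le4 (s : colT) i : gs s i <= 4.
Proof. rewrite /gs; case: insub => // i'; by have := ltn_ord (s i'). Qed.

Definition Lg (t : seq colT) (i j : nat) : nat := gs (nth s0 t j) i.
End Cols.

Section Card.
Variables r c : nat.
Local Notation cT := (cell r c).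

Lemma lab_le4' (P : {set {set cT}}) x : lab P x <= 4.
Proof. rewrite /lab; case: pickP => // y _; exact: dir_le4. Qed.

Definition phi (P : {set {set cT}}) : c.-tuple (colT r) :=
  [tuple [ffun i : 'I_r => inord (lab P (i, j)) : 'I_5] | j < c].

Lemma Lg_phi P (i : 'I_r) (j : 'I_c) : Lg (phi P) i j = lab P (i, j).
Proof.
rewrite /Lg -tnth_nth tnth_mktuple gsE ffunE inordK //.
by have := lab_le4' P (i, j); lia.
Qed.

Lemma Lg_tuple (t : c.-tuple (colT r)) (i : 'I_r) (j : 'I_c) : Lg t i j = tnth t j i.
Proof. by rewrite /Lg -tnth_nth gsE. Qed.

Lemma validf_ext (f g : cT -> nat) : f =1 g -> validf f = validf g.
Proof.
move=> e; rewrite /validf.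
have E1 : [forall x, (0 < f x) ==> [exists y, dir x y == f x]] =
          [forall x, (0 < g x) ==> [exists y, dir x y == g x]].
  by apply: eq_forallb => x; rewrite e.
have E2 : [forall x, forall y, ((0 < f x) && (dir x y == f x)) ==> (f y == dir y x)] =
          [forall x, forall y, ((0 < g x) && (dir x y == g x)) ==> (g y == dir y x)].
  by apply: eq_forallb => x; apply: eq_forallb => y; rewrite !e.
have E3 : [forall a, forall b, forall d, forall e,
         blockpos a b d e ==> [|| f a == 1, f a == 3, f b == 3 | f d == 1]] =
          [forall a, forall b, forall d, forall e,
         blockpos a b d e ==> [|| g a == 1, g a == 3, g b == 3 | g d == 1]].
  by do 4 (apply: eq_forallb => ?); rewrite !e.
by rewrite E1 E2 E3.
Qed.

Lemma T_grid : T r c = #|[set t : c.-tuple (colT r) | gridOK r c (Lg t)]|.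
Proof.
rewrite /T -(card_in_imset (f := phi)).
  apply: eq_card => t; rewrite [in RHS]inE; apply/imsetP/idP.
    case=> P; rewrite inE => hP ->.
    rewrite -validf_grid; last by move=> i j; rewrite Lg_phi lab_le4'.
    rewrite (validf_ext (g := lab P)); first exact: tatami_valid.
    by case=> i j /=; rewrite Lg_phi.
  move=> hg.
  have hv : validf (fun x : cT => Lg t x.1 x.2).
    by rewrite validf_grid // => i j; exact: gs_le4.
  exists (Pf (fun x : cT => Lg t x.1 x.2)); first by rewrite inE; exact: Pf_tatami.
  apply: eq_from_tnth => j; rewrite tnth_mktuple; apply/ffunP => i; rewrite ffunE.
  apply: val_inj; rewrite /= Pf_lab // inordK; first by rewrite Lg_tuple.
  by have := gs_le4 (nth (s0 r) t j) i; rewrite /Lg /=; lia.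
move=> P Q; rewrite !inE => /andP [tP _] /andP [tQ _] e.
have hl x : lab P x = lab Q x.
  by case: x => i j; rewrite -!Lg_phi e.
rewrite (tP_eq tP) (tP_eq tQ); apply: eq_imset => x.
by rewrite /blk !hl.
Qed.
End Card.

Section Word.
Variables r n : nat.
Local Notation S := (colT r).
Local Notation g := (@gs r).

Definition colOK (s : S) : bool := [forall i : 'I_r,
  ((g s i == 3) ==> (i.+1 < r) && (g s i.+1 == 4)) &&
  ((g s i == 4) ==> (0 < i) && (g s i.-1 == 3))].
Definition pairOK (s s' : S) : bool := [forall i : 'I_r,
  ((g s i == 1) == (g s' i == 2)) &&
  ((i.+1 < r) ==> [|| g s i == 1, g s i == 3, g s' i == 3 | g s i.+1 == 1])].
Definition noL (s : S) : bool := [forall i : 'I_r, g s i != 2].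
Definition noR (s : S) : bool := [forall i : 'I_r, g s i != 1].
Definition stP (s : S) : bool := colOK s && noL s.
Definition Rw (s s' : S) : bool := pairOK s s' && colOK s'.

Definition four (t : seq S) : bool :=
  [&& [forall j : 'I_n.+1, colOK (nth (s0 r) t j)],
      [forall j : 'I_n, pairOK (nth (s0 r) t j) (nth (s0 r) t j.+1)],
      noL (nth (s0 r) t 0) & noR (nth (s0 r) t n)].

Lemma W_four (t : n.+1.-tuple S) :
  [&& stP (thead t), path Rw (thead t) (behead t) & noR (last (thead t) (behead t))] = four t.
Proof.
have ht : val t = thead t :: behead t by case: t => [[|x p]] //.
have hs : size (behead t) = n by rewrite size_behead size_tuple.
have nt k : nth (s0 r) t k.+1 = nth (s0 r) (behead t) k by rewrite ht.
have n0 : nth (s0 r) t 0 = thead t by rewrite ht.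
have nl : nth (s0 r) t n = last (thead t) (behead t).
  by have := nth_last (s0 r) (thead t :: behead t); rewrite /= hs => <-; rewrite ht.
rewrite /four n0 nl.
move: (thead t) (behead t) ht hs nt n0 nl => x p ht hs nt n0 nl.
apply/idP/idP.
  case/and3P => /andP [cx lx] /(pathP (s0 r)) hp hr.
  apply/and4P; split => //.
  - apply/forallP => j; case: j => [[|k] hk] /=; first by rewrite n0.
    by rewrite nt; have := hp k; rewrite hs => /(_ hk) /andP [].
  - apply/forallP => j; rewrite nt; case: j => k hk /=.
    have := hp k; rewrite hs => /(_ hk) /andP [] /=.
    by case: k hk {hp} => [|k] hk /=; rewrite ?n0 // -nt.
case/and4P => /forallP hc /forallP hp lx hr.
apply/and3P; split => //.
  by rewrite /stP lx andbT; have := hc ord0; rewrite /= n0.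
apply/(pathP (s0 r)) => k; rewrite hs => hk; apply/andP; split.
  have := hp (Ordinal hk); rewrite /= nt.
  by rewrite ht.
have hk' : k.+1 < n.+1 by [].
by have := hc (Ordinal hk'); rewrite /= nt.
Qed.
End Word.

Section Word2.
Variables r n : nat.
Local Notation S := (colT r).

Lemma grid_four (t : seq S) : gridOK r n.+1 (Lg t) = @four r n t.
Proof.
apply/idP/idP.
  move=> hg; have G (i : 'I_r) (j : 'I_n.+1) := forallP (forallP hg i) j.
  apply/and4P; split.
  - apply/forallP => j; apply/forallP => i.
    by move: (G i j) => /and5P [_ _ g3 g4 _]; rewrite /Lg in g3 g4; rewrite g3 g4.
  - apply/forallP => j; apply/forallP => i.
    have hj1 : j < n.+1 by apply: ltn_trans (ltn_ord j) _.
    have hj2 : j.+1 < n.+1 by rewrite ltnS.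
    move: (G i (Ordinal hj1)) (G i (Ordinal hj2)) => /and5P [g1 _ _ _ g5] /and5P [_ g2 _ _ _].
    rewrite /Lg /= in g1 g5 g2.
    apply/andP; split; last first.
      apply/implyP => hi; move/implyP: g5; apply; by rewrite hi hj2.
    apply/eqP; apply/idP/idP.
      by move=> e; move: g1; rewrite e /= => /andP [_].
    by move=> e; move: g2; rewrite e.
  - apply/forallP => i; move: (G i ord0) => /and5P [_ g2 _ _ _]; rewrite /Lg /= in g2.
    by apply/negP => e; move: g2; rewrite e.
  - apply/forallP => i; move: (G i ord_max) => /and5P [g1 _ _ _ _]; rewrite /Lg /= ltnn in g1.
    by apply/negP => e; move: g1; rewrite e.
case/and4P => /forallP hc /forallP hp /forallP hl /forallP hr.
apply/forallP => i; apply/forallP => j.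
move: (hc j) => /forallP /(_ i) /andP [c3 c4].
apply/and5P; split => //.
- apply/implyP => e.
  case: (ltnP j n) => hj.
    move: (hp (Ordinal hj)) => /forallP /(_ i) /andP [/eqP p1 _].
    by rewrite /= in p1; rewrite ltnS hj /Lg -p1; exact: e.
  have ejn : (j : nat) = n by have := ltn_ord j; lia.
  by move: (hr i); rewrite /Lg ejn in e *; rewrite e.
- apply/implyP => e; case: j c3 c4 e => [[|k] hk] /= c3 c4 e.
    by move: (hl i); rewrite /Lg in e *; rewrite e.
  have hk' : k < n by [].
  move: (hp (Ordinal hk')) => /forallP /(_ i) /andP [/eqP p1 _].
  by rewrite /= in p1; rewrite p1.
- apply/implyP => /andP [hi hj].
  move: (hp (Ordinal (hj : j < n))) => /forallP /(_ i) /andP [_ /implyP p2].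
  exact: p2.
Qed.
End Word2.


Section Final.
Import GRing.Theory Num.Theory.
Local Open Scope ring_scope.

Lemma T_Cnt r n : T r n.+1 = Cnt (@Rw r) (@stP r) (@noR r) n.
Proof.
rewrite T_grid /Cnt; apply: eq_card => t; rewrite !inE grid_four -W_four.
by rewrite andbA.
Qed.

End Final.

Theorem theorem3 (r : nat) (hr : 1 <= r) : rational_gf (fun c => T r c).
Proof.
pose S := colT r.
pose M := Mw (@Rw r); pose u := uw (@stP r); pose v := vw (@noR r).
apply: (@rat_from_rec _ #|S| 1 (char_poly M)).
  have := char_poly_monic M; rewrite qualifE => /eqP.
  by rewrite lead_coefE size_char_poly.
move=> n hn; rewrite -[RHS](rec_mx M u v n.-1); apply: eq_bigr => j _.
congr (_ * _)%R.
have -> : (n + j)%N = (n.-1 + j).+1 by lia.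
by rewrite T_Cnt CntM.
Qed.
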